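(* Let $n \ge 2$, $d \in \{1,\dots,n-1\}$, let $\triangle$ be a regular $n$-simplex in $\mathbb{R}^n$, and let $L = (n-d)(-\triangle)$. Then for every $(n-d)$-dimensional linear subspace $\xi$ of $\mathbb{R}^n$, $L_\xi$ contains a translate of $\triangle_\xi$; but for every $c$ with $0 < c < \tfrac{n}{n-d}$, the set $cL$ contains no translate of $\triangle$. (In particular, the constants $\tfrac{n}{n-1}$ in Theorem 5.1 and $\tfrac{n}{n-d}$ in Theorem 6.1 cannot be replaced by smaller constants.)
   Context: For a set $S\subseteq\mathbb{R}^n$ and a linear subspace $\xi$, $S_\xi$ denotes the orthogonal projection of $S$ onto $\xi$. ''$A$ contains a translate of $B$'' means $B + w \subseteq A$ for some vector $w$. For $c \in \mathbb{R}$, $cS = \{cx : x \in S\}$. *)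

(* Defs.v *)
From HB Require Import structures.
From mathcomp Require Import all_boot all_order all_algebra.
Set Implicit Arguments. Unset Strict Implicit. Unset Printing Implicit Defensive.
Import Order.TTheory GRing.Theory Num.Theory.
Local Open Scope ring_scope.

Definition dotv (R : rcfType) (n : nat) (x y : 'rV[R]_n) : R := (x *m y^T) 0 0.

Definition vset (R : rcfType) (n : nat) := 'rV[R]_n -> Prop.

Definition simplex_set (R : rcfType) (n : nat) (v : 'I_n.+1 -> 'rV[R]_n) : vset R n :=
  fun x => exists l : 'I_n.+1 -> R,
    (forall i, 0 <= l i) /\ \sum_i l i = 1 /\ x = \sum_i l i *: v i.

Definition regular_vertices (R : rcfType) (n : nat) (v : 'I_n.+1 -> 'rV[R]_n) : Prop :=
  exists s : R, 0 < s /\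
    forall i j : 'I_n.+1, i != j -> dotv (v i - v j) (v i - v j) = s.

Definition scale_set (R : rcfType) (n : nat) (c : R) (S : vset R n) : vset R n :=
  fun y => exists x, S x /\ y = c *: x.

Definition contains_translate (R : rcfType) (n : nat) (A B : vset R n) : Prop :=
  exists w : 'rV[R]_n, forall x, B x -> A (x + w).

(* The linear subspace xi is the row space of the matrix X.
   S_xi = orthogonal projection of S onto xi: p is the projection of x iff
   p ∈ xi and x - p ⟂ xi. *)
Definition proj_set (R : rcfType) (n : nat) (X : 'M[R]_n) (S : vset R n) : vset R n :=
  fun p => exists x, S x /\ (p <= X)%MS /\
    forall y : 'rV[R]_n, (y <= X)%MS -> dotv (x - p) y = 0.

(* Main.v *)
Require Import Defs.
From HB Require Import structures.
From mathcomp Require Import all_boot all_order all_algebra.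
From mathcomp Require Import ring lra zify.
From Stdlib Require Import ClassicalEpsilon.
Import Order.TTheory GRing.Theory Num.Theory.
Local Open Scope ring_scope.

Set Implicit Arguments. Unset Strict Implicit. Unset Printing Implicit Defensive.


Lemma fchoice (A B : Type) (P : A -> B -> Prop) :
  (forall a, exists b, P a b) -> exists f, forall a, P a (f a).
Proof.
move=> H; exists (fun a => proj1_sig (constructive_indefinite_description _ (H a))).
move=> a; exact: proj2_sig.
Qed.

Lemma sqr0 (R : rcfType) p q (W : 'M[R]_(p, q)) : W *m W^T = 0 -> W = 0.
Proof.
move=> H; apply/matrixP => i j.
have := congr1 (fun M : 'M_p => M i i) H; rewrite !mxE => Hs.
have Hn : forall l, true -> 0 <= W i l * W^T l i.
  by move=> l _; rewrite mxE -expr2 sqr_ge0.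
have := psumr_eq0P Hn Hs (erefl true) (i := j).
by rewrite mxE => /eqP; rewrite mulf_eq0 orbb => /eqP.
Qed.

Lemma proj_exists (R : rcfType) n (X : 'M[R]_n) (z : 'rV[R]_n) :
  exists p : 'rV[R]_n, (p <= X)%MS /\ (z - p) *m X^T = 0.
Proof.
have Hsub : (X *m X^T <= X^T)%MS by apply: submxMl.
have Hrk : (\rank X^T <= \rank (X *m X^T))%N.
  set K := kermx (X *m X^T).
  have HK : (K <= kermx X)%MS.
    apply/sub_kermxP; apply: sqr0.
    by rewrite trmx_mul !mulmxA -(mulmxA K) mulmx_ker mul0mx.
  have := mxrankS HK; rewrite !mxrank_ker mxrank_tr.
  have := rank_leq_row (X *m X^T); have := rank_leq_row X; lia.
have Hs2 : (X^T <= X *m X^T)%MS.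
  by case: (mxrank_leqif_sup Hsub) => Hle <-; rewrite eqn_leq Hle Hrk.
have : (z *m X^T <= X *m X^T)%MS by apply: submx_trans (submxMl _ _) Hs2.
case/submxP => a Ha; exists (a *m X); split; first exact: submxMl.
by rewrite mulmxBl Ha mulmxA subrr.
Qed.

Lemma dot_orth (R : rcfType) n (X : 'M[R]_n) (z y : 'rV[R]_n) :
  z *m X^T = 0 -> (y <= X)%MS -> dotv z y = 0.
Proof.
move=> Hz /submxP [c ->]; rewrite /dotv trmx_mul mulmxA Hz mul0mx mxE //.
Qed.


Definition convexP (R : rcfType) n (C : 'rV[R]_n -> Prop) :=
  forall m (l : 'I_m -> R) (x : 'I_m -> 'rV[R]_n), (forall j, 0 <= l j) ->
    \sum_j l j = 1 -> (forall j, 0 < l j -> C (x j)) -> C (\sum_j l j *: x j).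

Lemma helly (R : rcfType) n (X : 'M[R]_n) m (C : 'I_m -> 'rV[R]_n -> Prop) :
 (forall i, convexP (C i)) -> (forall i x y, C i x -> (x - y) *m X^T = 0 -> C i y) ->
 (forall S : {set 'I_m}, (#|S| <= (\rank X).+1)%N -> exists x, forall i, i \in S -> C i x) ->
 exists x, forall i, C i x.
Proof.
elim: m C => [|m IH] C Hc Hcl HS; first by exists 0 => -[].
case: (leqP m.+1 (\rank X).+1)=> Hm.
  have [|x Hx] := HS setT; first by rewrite cardsT card_ord.
  by exists x => i; apply: Hx; rewrite in_setT.
have Hx : forall j, exists x, forall i, i != j -> C i x.
  move=> j.
  have [|x Hx] := IH (fun i => C (lift j i)) (fun i => Hc _) (fun i => Hcl _).
    move=> S' HS'; have [|x Hx] := HS (lift j @: S'); first by rewrite card_imset //; exact: lift_inj.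
    by exists x => i Hi; apply: Hx; exact: imset_f.
  exists x => i Hij; rewrite eq_sym in Hij; have [k' -> _] := unlift_some Hij; exact: Hx.
have [x Hxx] := fchoice Hx.
pose Xs := \matrix_(j < m.+1, l < n) x j 0 l.
pose A := Xs *m X^T.
pose M := row_mx A (const_mx 1 : 'M[R]_(m.+1, 1)).
have HrM : (\rank M <= (\rank X).+1)%N.
  rewrite -mxrank_tr tr_row_mx -addsmxE.
  have := mxrank_adds_leqif A^T (const_mx 1 : 'M[R]_(m.+1, 1))^T => -[H _].
  apply: leq_trans H _; rewrite -(addn1 (\rank X)) leq_add //.
    by rewrite mxrank_tr -(mxrank_tr X); exact: mxrankM_maxr.
  exact: rank_leq_row.
have HK : kermx M != 0.
  by rewrite -mxrank_eq0 mxrank_ker; apply/eqP; lia.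
have [i0 Hi0] : exists i, row i (kermx M) != 0.
  case: (pickP (fun i => row i (kermx M) != 0)) => [i Hi|Hn]; first by exists i.
  have HK0 : kermx M = 0.
    by apply/row_matrixP => i; rewrite row0; apply/eqP; exact: negbFE (Hn i).
  by rewrite HK0 eqxx in HK.
set u := row i0 (kermx M).
have HuM : u *m M = 0 by rewrite /u -row_mul mulmx_ker row0.
move: HuM; rewrite mul_mx_row -row_mx0 => /eq_row_mx [HA Hc1].
pose a j := u 0 j.
have Hsum : \sum_j a j = 0.
  have := congr1 (fun M : 'M_1 => M 0 0) Hc1; rewrite !mxE => H; rewrite -[RHS]H.
  by rewrite /a; apply: eq_bigr => j _; rewrite [const_mx _ _ _]mxE mulr1.
have HXs : u *m Xs = \sum_j a j *: x j.
  rewrite mulmx_sum_row; apply: eq_bigr => j _; congr (_ *: _).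
  by apply/rowP => l; rewrite !mxE.
have HAx : (\sum_j a j *: x j) *m X^T = 0 by rewrite -HXs -mulmxA.
have [j0 Hj0] : exists j, a j != 0.
  case: (pickP (fun j => a j != 0)) => [j Hj|Hn]; first by exists j.
  have Hu0 : u = 0 by apply/rowP => j; rewrite [RHS]mxE; apply/eqP; exact: negbFE (Hn j).
  by move: Hi0; rewrite -/u Hu0 eqxx.
pose p j := if 0 < a j then a j else 0.
pose q j := p j - a j.
have Hp0 : forall j, 0 <= p j by move=> j; rewrite /p; case: ifP => // /ltW.
have Hq0 : forall j, 0 <= q j.
  by move=> j; rewrite /q /p; case: ifP => H; [rewrite subrr | rewrite sub0r oppr_ge0; rewrite ltNge in H; move/negbFE: H].
set s := \sum_j p j.
have Hqs : \sum_j q j = s by rewrite /q sumrB Hsum subr0.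
have Hs : 0 < s.
  rewrite lt0r sumr_ge0 // andbT; apply/eqP => Hs0.
  have Hp := psumr_eq0P (fun j _ => Hp0 j) Hs0.
  have Hq := psumr_eq0P (fun j _ => Hq0 j) (etrans Hqs Hs0).
  move: Hj0; have := Hq j0 isT; rewrite /q Hp // sub0r => /eqP; rewrite oppr_eq0 => ->.
  by [].
have Hsn : s != 0 by rewrite gt_eqF.
pose r := \sum_j (p j / s) *: x j.
pose r' := \sum_j (q j / s) *: x j.
have Hrr : (r - r') *m X^T = 0.
  have -> : r - r' = s^-1 *: \sum_j a j *: x j.
    rewrite /r /r' -sumrB scaler_sumr; apply: eq_bigr => j _.
    by rewrite -scalerBl scalerA /q; congr (_ *: _); field.
  by rewrite -scalemxAl HAx scaler0.
have Hsum1 : forall f : 'I_m.+1 -> R, \sum_j f j = s -> \sum_j f j / s = 1.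
  by move=> f Hf; rewrite -mulr_suml Hf divff.
exists r => i; case: (ltrP 0 (a i)) => Hai.
- apply: (Hcl i r'); last by rewrite -opprB mulNmx Hrr oppr0.
  apply: Hc => //; first by move=> j; rewrite divr_ge0 // ltW.
    by apply: Hsum1.
  move=> j Hj; apply: Hxx; apply/eqP => Eji; move: Hj; rewrite -Eji /q /p Hai subrr mul0r ltxx.
  by [].
- apply: Hc => //; first by move=> j; rewrite divr_ge0 // ltW.
    by apply: Hsum1.
  move=> j Hj; apply: Hxx; apply/eqP => Eji; move: Hj; rewrite -Eji /p; case: ifP => H; [by rewrite ltNge Hai in H | rewrite mul0r ltxx].
  by [].
Qed.


Section Dot.
Variables (R : rcfType) (n : nat).
Implicit Types x y z : 'rV[R]_n.
Lemma dotvDl x y z : dotv (x + y) z = dotv x z + dotv y z.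
Proof. by rewrite /dotv mulmxDl mxE. Qed.
Lemma dotvZl (a : R) x y : dotv (a *: x) y = a * dotv x y.
Proof. by rewrite /dotv -scalemxAl mxE. Qed.
Lemma dotvNl x y : dotv (- x) y = - dotv x y.
Proof. by rewrite -scaleN1r dotvZl mulN1r. Qed.
Lemma dotvBl x y z : dotv (x - y) z = dotv x z - dotv y z.
Proof. by rewrite dotvDl dotvNl. Qed.
Lemma dotvC x y : dotv x y = dotv y x.
Proof. by rewrite /dotv -[in LHS](trmxK x) -trmx_mul mxE. Qed.
Lemma dotvDr x y z : dotv z (x + y) = dotv z x + dotv z y.
Proof. by rewrite !(dotvC z) dotvDl. Qed.
Lemma dotvBr x y z : dotv z (x - y) = dotv z x - dotv z y.
Proof. by rewrite !(dotvC z) dotvBl. Qed.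
Lemma dotv_suml m (f : 'I_m -> 'rV[R]_n) y :
  dotv (\sum_j f j) y = \sum_j dotv (f j) y.
Proof. by rewrite /dotv mulmx_suml summxE. Qed.
Lemma dotv_sumr m (f : 'I_m -> 'rV[R]_n) y :
  dotv y (\sum_j f j) = \sum_j dotv y (f j).
Proof. by rewrite dotvC dotv_suml; apply: eq_bigr => j _; rewrite dotvC. Qed.
End Dot.


Lemma part2 (R : rcfType) (n : nat) (v : 'I_n.+1 -> 'rV[R]_n) (lam : R) (w : 'rV[R]_n) :
  (0 < n)%N -> regular_vertices v -> 0 <= lam ->
  (forall i, exists y, simplex_set v y /\ v i + w = - lam *: y) ->
  n%:R <= lam.
Proof.
move=> n0 [s [s0 Hreg]] lam0 Hy.
pose N := n.+1%:R : R.
have N0 : N != 0 by rewrite pnatr_eq0.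
pose g := N^-1 *: \sum_j v j.
pose u i := v i - g.
have Hsg : \sum_(j < n.+1) g = N *: g.
  by rewrite sumr_const card_ord scaler_nat.
have Hu0 : \sum_i u i = 0.
  by rewrite sumrB Hsg scalerA mulfV // scale1r subrr.
pose D i j := dotv (u i) (u j).
have HDs : forall i j, D i j = D j i by move=> i j; rewrite /D dotvC.
have Hrow : forall i, \sum_j D i j = 0.
  by move=> i; rewrite /D -dotv_sumr Hu0 /dotv trmx0 mulmx0 mxE.
have Hreg' : forall i j, 2 * D i j = D i i + D j j - s + s * (j == i)%:R.
  move=> i j; case: eqP => [->|/eqP Hij]; first by rewrite mulr1; ring.
  have := Hreg i j; rewrite eq_sym Hij => /(_ isT).
  have -> : v i - v j = u i - u j by rewrite /u opprB addrA subrK.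
  rewrite (dotvBl (u i) (u j)) (dotvBr (u i) (u j) (u i)) (dotvBr (u i) (u j) (u j)) (dotvC (u j) (u i)) => <-.
  rewrite mulr0 /D; ring.
pose A := \sum_j D j j.
have Hdiag : forall i, N * D i i = n%:R * s - A.
  move=> i; have := Hrow i.
  move/(congr1 (fun x => 2 * x)); rewrite mulr_sumr.
  under eq_bigr do rewrite Hreg'.
  rewrite !big_split /= !sumr_const card_ord -/A.
  rewrite (bigD1 i) //= eqxx big1 ?addr0; last by move=> j /negbTE ->; rewrite mulr0.
  rewrite -(mulr_natl (D i i)) -(mulr_natl (- s)) -/N mulr1 mulr0 => H.
  have -> : n%:R = N - 1 by rewrite /N -natr1 addrK.
  by apply/eqP; rewrite -subr_eq0 -H; apply/eqP; ring.
have HA : A = n%:R * s / 2.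
  have : \sum_i N * D i i = \sum_(i < n.+1) (n%:R * s - A) by apply: eq_bigr => i _; rewrite Hdiag.
  rewrite -mulr_sumr -/A sumr_const card_ord -(mulr_natl (n%:R * s - A)) -/N => H.
  have H2 : A = n%:R * s - A by apply: (mulfI N0).
  have H3 : 2 * A = n%:R * s by rewrite mulr2n mulrDl !mul1r {1}H2 subrK.
  by rewrite -H3; field.
pose al := n%:R * s / (2 * N).
have nR0 : (0 < n%:R :> R) by rewrite ltr0n.
have Nn : N = n%:R + 1 by rewrite /N -natr1.
have N0' : 0 < N by rewrite Nn; lra.
have Hii : forall i, D i i = al.
  move=> i; apply: (mulfI N0); rewrite Hdiag HA /al; field; by rewrite addrC -Nn.
have al0 : 0 < al by rewrite /al; apply: divr_gt0; [exact: mulr_gt0|]; lra.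
have Hlow : forall i j, - (al / n%:R) <= D i j.
  move=> i j; have := Hreg' i j; rewrite !Hii.
  case: eqP => [-> _|_]; first by rewrite Hii; apply: le_trans (ltW al0); rewrite oppr_le0 divr_ge0 // ltW.
  rewrite mulr0 addr0 => H.
  have -> : D i j = (2 * D i j) / 2 by field.
  rewrite H.
  have -> : (al + al - s) / 2 = - (al / n%:R).
    by rewrite /al; field; rewrite addrC -Nn N0 andbT gt_eqF.
  by [].
have Hi : forall i, al + (dotv w (u i) + (1 + lam) * dotv g (u i)) <= lam * (al / n%:R).
  move=> i; have [y [[mu [Hmu [Hsmu Hy']]] Hyi]] := Hy i.
  have E := congr1 (fun z => dotv z (u i)) Hyi; simpl in E.
  have Hv : forall j, dotv (v j) (u i) = D j i + dotv g (u i).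
    by move=> j; rewrite /D -dotvDl /u subrK.
  have HS : dotv y (u i) = \sum_j mu j * D j i + dotv g (u i).
    rewrite Hy' dotv_suml.
    transitivity (\sum_j (mu j * D j i + mu j * dotv g (u i))).
      by apply: eq_bigr => j _; rewrite dotvZl Hv mulrDr.
    by rewrite big_split /= -mulr_suml Hsmu mul1r.
  have Hlb : - (al / n%:R) <= \sum_j mu j * D j i.
    apply: le_trans (ler_sum _ (fun j _ => ler_wpM2l (Hmu j) (Hlow j i))).
    by rewrite -mulr_suml Hsmu mul1r.
  move: E; rewrite dotvDl dotvZl HS Hv Hii => E.
  have Hm : lam * (- \sum_j mu j * D j i) <= lam * (al / n%:R).
    by apply: ler_wpM2l => //; rewrite lerNl.
  set S := \sum_j mu j * D j i in E Hm Hlb *.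
  set G := dotv g (u i) in E *.
  set W := dotv w (u i) in E *.
  have -> : al + (W + (1 + lam) * G) = lam * - S.
    by apply/eqP; rewrite -subr_eq0; apply/eqP; transitivity (al + G + W - (- lam * (S + G))); [ring | by rewrite E subrr].
  exact: Hm.
have Hsum : \sum_i (al + (dotv w (u i) + (1 + lam) * dotv g (u i))) <= \sum_(i < n.+1) lam * (al / n%:R).
  by apply: ler_sum => i _; exact: Hi.
have Z : forall x : 'rV[R]_n, dotv x 0 = 0 by move=> x; rewrite /dotv trmx0 mulmx0 mxE.
have E1 : \sum_i (al + (dotv w (u i) + (1 + lam) * dotv g (u i))) = N * al.
  rewrite big_split /= big_split /= -(dotv_sumr u w) -[\sum_(i < n.+1) (1 + lam) * _]mulr_sumr -(dotv_sumr u g) Hu0 !Z mulr0 !addr0.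
  by rewrite sumr_const card_ord /N mulr_natl.
have E2 : \sum_(i < n.+1) lam * (al / n%:R) = N * (lam * (al / n%:R)).
  by rewrite sumr_const card_ord /N mulr_natl.
rewrite E1 E2 in Hsum.
have H1 : al <= lam * (al / n%:R) by rewrite -(ler_pM2l N0').
have H2 : al * n%:R <= lam * al.
  by move: H1; rewrite mulrA -(ler_pM2r nR0) mulfVK // gt_eqF.
by rewrite -(ler_pM2r al0) mulrC.
Qed.


Lemma sum_delta (R : rcfType) N (V : lmodType R) (i : 'I_N) (f : 'I_N -> V) :
  \sum_m (m == i)%:R *: f m = f i.
Proof.
rewrite (bigD1 i) //= eqxx scale1r big1 ?addr0 //.
by move=> j /negbTE ->; rewrite scale0r.
Qed.

Lemma sum_deltaR (R : rcfType) N (i : 'I_N) (f : 'I_N -> R) :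
  \sum_m (m == i)%:R * f m = f i.
Proof.
rewrite (bigD1 i) //= eqxx mul1r big1 ?addr0 //.
by move=> j /negbTE ->; rewrite mul0r.
Qed.

Lemma sum_ind (R : rcfType) N (A : {set 'I_N}) :
  \sum_m ((m \in A)%:R : R) = #|A|%:R.
Proof.
rewrite -sum1_card natr_sum [RHS]big_mkcond; apply: eq_bigr => m _.
by case: (m \in A).
Qed.

Lemma sum_indV (R : rcfType) N (V : lmodType R) (A : {set 'I_N}) (f : 'I_N -> V) :
  \sum_m (m \in A)%:R *: f m = \sum_(m in A) f m.
Proof.
rewrite [RHS]big_mkcond; apply: eq_bigr => m _.
by case: (m \in A); rewrite ?scale1r ?scale0r.
Qed.

Lemma simplex_vertex (R : rcfType) n (v : 'I_n.+1 -> 'rV[R]_n) i : simplex_set v (v i).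
Proof.
exists (fun j => (j == i)%:R); split; first by move=> j; rewrite ler0n.
split; last by rewrite sum_delta.
by rewrite -[RHS](sum_deltaR i (fun _ => 1)); apply: eq_bigr => j _; rewrite mulr1.
Qed.

Lemma simplex_convex (R : rcfType) n (v : 'I_n.+1 -> 'rV[R]_n) m (l : 'I_m -> R)
  (y : 'I_m -> 'rV[R]_n) :
  (forall j, 0 <= l j) -> \sum_j l j = 1 -> (forall j, simplex_set v (y j)) ->
  simplex_set v (\sum_j l j *: y j).
Proof.
move=> Hl Hs Hy; have [mu Hmu] := fchoice Hy.
exists (fun i => \sum_j l j * mu j i); split.
  by move=> i; apply: sumr_ge0 => j _; apply: mulr_ge0 => //; case: (Hmu j) => H _; exact: H.
split.
  rewrite exchange_big /= -[RHS]Hs; apply: eq_bigr => j _.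
  by rewrite -mulr_sumr; case: (Hmu j) => _ [-> _]; rewrite mulr1.
transitivity (\sum_j \sum_i (l j * mu j i) *: v i).
  apply: eq_bigr => j _; case: (Hmu j) => _ [_ ->].
  by rewrite scaler_sumr; apply: eq_bigr => i _; rewrite scalerA.
by rewrite exchange_big /=; apply: eq_bigr => i _; rewrite scaler_suml.
Qed.

Lemma comb_orth (R : rcfType) n (X : 'M[R]_n) m (l : 'I_m -> R) (z : 'I_m -> 'rV[R]_n) :
  (forall j, l j != 0 -> z j *m X^T = 0) -> (\sum_j l j *: z j) *m X^T = 0.
Proof.
move=> H; rewrite mulmx_suml big1 // => j _.
rewrite -scalemxAl; case: (eqVneq (l j) 0) => [->|Hj]; first by rewrite scale0r.
by rewrite H // scaler0.
Qed.

Unset Implicit Arguments.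

Theorem mainTheorem9 (R : rcfType) (n d : nat) (v : 'I_n.+1 -> 'rV[R]_n) :
  (2 <= n)%N -> (1 <= d <= n - 1)%N -> regular_vertices v ->
  let T := simplex_set v in
  let L := scale_set ((n - d)%N)%:R (scale_set (-1) T) in
  (forall X : 'M[R]_n, \rank X = (n - d)%N ->
      contains_translate (proj_set X L) (proj_set X T)) /\
  (forall c : R, 0 < c -> c < n%:R / ((n - d)%N)%:R ->
      ~ contains_translate (scale_set c L) T).
Proof.
move=> n2 hd reg T L.
have k1 : (1 <= n - d)%N by lia.
have kR : (0 < ((n - d)%N)%:R :> R) by rewrite ltr0n.
split; last first.
  move=> c c0 hc [w Hw].
  have := @part2 R n v (c * ((n - d)%N)%:R) w (ltn_trans (isT : (0 < 1)%N) n2) reg.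
  have lam0 : 0 <= c * ((n - d)%N)%:R by apply: mulr_ge0; apply: ltW.
  move=> /(_ lam0) H.
  have : (n%:R <= c * ((n - d)%N)%:R).
    apply: H => i.
    have [z [[z' [[y [Ty ->]] ->]] Hz]] := Hw (v i) (simplex_vertex v i).
    exists y; split => //; rewrite Hz !scalerA; congr (_ *: _).
    by rewrite mulrN1.
  by rewrite leNgt -(ltr_pdivlMr _ _ kR) hc.
move=> X hX.
set k := (n - d)%N in k1 kR hX L *.
pose C i w := exists y, simplex_set v y /\ (k%:R *: y + v i + w) *m X^T = 0.
have [w Hw] : exists w, forall i, C i w.
  apply: (helly (X:=X)).
  - move=> i m l x Hl Hs Hx.
    have [|yf Hyf] := fchoice (P := fun j y => simplex_set v y /\
        (0 < l j -> (k%:R *: y + v i + x j) *m X^T = 0)).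
      move=> j; case: (ltrP 0 (l j)) => Hlj.
        by have [y [Hy1 Hy2]] := Hx j Hlj; exists y; split.
      exists (v ord0); split; first exact: simplex_vertex.
      by [].
    exists (\sum_j l j *: yf j); split.
      by apply: simplex_convex => // j; case: (Hyf j).
    have -> : k%:R *: (\sum_j l j *: yf j) + v i + \sum_j l j *: x j =
        \sum_j l j *: (k%:R *: yf j + v i + x j).
      transitivity (\sum_j (l j *: (k%:R *: yf j)) + \sum_j l j *: v i + \sum_j l j *: x j).
        rewrite -scaler_suml Hs scale1r scaler_sumr; congr (_ + _ + _).
        by apply: eq_bigr => j _; rewrite !scalerA mulrC.
      by rewrite -!big_split /=; apply: eq_bigr => j _; rewrite !scalerDr.
    apply: comb_orth => j Hj; case: (Hyf j) => _; apply.
    by rewrite lt0r Hj Hl.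
  - move=> i x y [z [Hz Hzx]] Hxy; exists z; split => //.
    have Exy : y *m X^T = x *m X^T.
      by apply/eqP; rewrite eq_sym -subr_eq0 -mulmxBl Hxy.
    by move: Hzx; rewrite !mulmxDl Exy.
  - move=> S; rewrite hX -/k => HS.
    pose c := ((k.+1 - #|S|)%N)%:R : R.
    exists (- (\sum_(m in S) v m + c *: v ord0)) => i Hi.
    have kn0 : (k%:R : R) != 0 by rewrite gt_eqF.
    exists (k%:R^-1 *: (\sum_(m in S) v m - v i + c *: v ord0)); split; last first.
      rewrite scalerA mulfV // scale1r.
      have -> : \sum_(m in S) v m - v i + c *: v ord0 + v i - (\sum_(m in S) v m + c *: v ord0) = 0.
        by rewrite (addrAC (_ - v i)) subrK subrr.
      by rewrite mul0mx.
    exists (fun m => k%:R^-1 * ((m \in S)%:R - (m == i)%:R + c * (m == ord0)%:R)).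
    split.
      move=> m; apply: mulr_ge0; first by rewrite invr_ge0 ler0n.
      apply: addr_ge0; last by rewrite mulr_ge0 ?ler0n.
      case: (eqVneq m i) => [->|_]; first by rewrite Hi subrr.
      by rewrite subr0 ler0n.
    split.
      rewrite -mulr_sumr big_split /= sumrB sum_ind.
      have Hd : forall i0 : 'I_n.+1, \sum_m ((m == i0)%:R : R) = 1.
        by move=> i0; rewrite -[RHS](sum_deltaR i0 (fun _ => 1)); apply: eq_bigr => m _; rewrite mulr1.
      rewrite Hd -mulr_sumr Hd mulr1 /c (natrB _ HS) -(natr1 k).
      have -> : (#|S|%:R - 1 + (k%:R + 1 - #|S|%:R) : R) = k%:R by ring.
      by rewrite mulVf.
    symmetry.
    transitivity (k%:R^-1 *: \sum_m ((m \in S)%:R - (m == i)%:R + c * (m == ord0)%:R) *: v m).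
      by rewrite scaler_sumr; apply: eq_bigr => m _; rewrite scalerA.
    congr (_ *: _).
    transitivity (\sum_m (m \in S)%:R *: v m - \sum_m (m == i)%:R *: v m + c *: \sum_m (m == ord0)%:R *: v m).
      rewrite scaler_sumr -sumrB -big_split; apply: eq_bigr => m _.
      by rewrite scalerDl scalerBl scalerA.
    by rewrite sum_indV !sum_delta.
have [p0 [Hp0 Hwp]] := proj_exists X w.
exists p0 => p [x [[l [Hl [Hs Hx]]] [Hp Hperp]]].
have [yf Hyf] := fchoice Hw.
pose y := \sum_i l i *: yf i.
exists (k%:R *: (-1 *: y)); split.
  exists (-1 *: y); split => //; exists y; split => //.
  by apply: simplex_convex => // i; case: (Hyf i).
split; first by apply: addmx_sub.
move=> y' Hy'.
have H1 : (k%:R *: y + x + w) *m X^T = 0.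
  have -> : k%:R *: y + x + w = \sum_i l i *: (k%:R *: yf i + v i + w).
    rewrite Hx.
    transitivity (\sum_i (l i *: (k%:R *: yf i)) + \sum_i l i *: v i + \sum_i l i *: w).
      rewrite -[\sum_i l i *: w]scaler_suml Hs scale1r /y scaler_sumr; congr (_ + _ + _).
      by apply: eq_bigr => j _; rewrite !scalerA mulrC.
    by rewrite -!big_split /=; apply: eq_bigr => j _; rewrite !scalerDr.
  by apply: comb_orth => j _; case: (Hyf j).
have E1 := dot_orth H1 Hy'.
have E2 := dot_orth Hwp Hy'.
have E3 := Hperp y' Hy'.
rewrite !dotvDl !dotvZl in E1; rewrite dotvBl in E2; rewrite dotvBl in E3.
rewrite dotvBl dotvDl !dotvZl.
lra.
Qed.
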